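(* Let $X$ be a finite set with $N=|X|$ and $n=\binom N2$. Let $t,t'$ be two binary equidistant trees on taxa $X$ with different coarse types, and let $\Omega>\omega>0$ be such that $\max\{\eta(t),\eta(t')\}\le\Omega$ and $\min\{\nu(t),\nu(t')\}\ge\omega$. Then \[ d_\Delta(t,t')\ \ge\ \omega\Bigl(\bigl(3-2\tfrac{\Omega}{\omega}\bigr)n+\tfrac32 N-2\Bigr). \]
   Context: An equidistant tree $t$ on taxa $X$ is identified with the vector $(t_{ab})\in\mathbb{R}^n$ (coordinates indexed by unordered pairs of distinct taxa) of leaf-to-leaf path lengths; such vectors are exactly those for which, for all distinct $a,b,c$, $\max\{t_{ab},t_{ac},t_{bc}\}$ is attained at least twice. Trees are considered up to adding a multiple of $\mathbb{1}$. The depth of a node is its distance from the root. Let $M=\max_{a\ne b}t_{ab}$; the depth of the lowest common ancestor of leaves $a\ne b$ equals $(M-t_{ab})/2$. Define $\eta(t)$ = maximal depth of an internal node $=\frac12(M-\min_{a\neq b}t_{ab})$ and $\nu(t)$ = minimal depth of an internal node other than the root $=\frac12\min\{M-t_{ab}: t_{ab}<M\}$ ($+\infty$ if there is none). The coarse type of $t$ is the partition of $X$ into the leaf sets of the subtrees at the children of the root, i.e. distinct $a,b$ are in the same block iff $t_{ab}<M$. The tree is binary if every internal node has exactly two children, i.e. for all distinct $a,b,c$ the numbers $t_{ab},t_{ac},t_{bc}$ are not all equal. $d_{\Delta}(x,y)=\sum_{i=1}^n (y_i-x_i) + n\max_{i}(x_i-y_i)$. *)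

(* Defs.v *)
From HB Require Import structures.
From mathcomp Require Import all_boot all_order all_algebra.
Set Implicit Arguments. Unset Strict Implicit. Unset Printing Implicit Defensive.
Import Order.TTheory GRing.Theory Num.Theory.
Local Open Scope ring_scope.

Section Trees.
Variables (R : realFieldType) (X : finType).

Definition pairs := {A : {set X} | #|A| == 2%N}.

Definition vec := pairs -> R.

(* Coordinate t_{ab} (for a <> b; 0 otherwise, never used). *)
Definition coord (t : vec) (a b : X) : R :=
  if @insub _ (fun A : {set X} => #|A| == 2%N) pairs [set a; b] is Some p
  then t p else 0.

(* maximum / minimum of f over all pairs (0 if there are no pairs) *)
Definition maxp (f : pairs -> R) : R :=
  let s := [seq f p | p <- enum {: pairs}] in \big[Num.max/head 0 s]_(v <- s) v.
Definition minp (f : pairs -> R) : R :=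
  let s := [seq f p | p <- enum {: pairs}] in \big[Num.min/head 0 s]_(v <- s) v.

Definition equidistant (t : vec) : Prop :=
  forall a b c : X, a != b -> a != c -> b != c ->
    let x := coord t a b in let y := coord t a c in let z := coord t b c in
    let m := Num.max x (Num.max y z) in
    [|| (x == m) && (y == m), (x == m) && (z == m) | (y == m) && (z == m)].

Definition binary (t : vec) : Prop :=
  forall a b c : X, a != b -> a != c -> b != c ->
    ~ (coord t a b = coord t a c /\ coord t a c = coord t b c).

Definition Mt (t : vec) : R := maxp t.

Definition eta_depth (t : vec) : R := (Mt t - minp t) / 2.

(* nu(t) = (1/2) min {M - t_ab : t_ab < M}; None encodes +infinity *)
Definition nu_depth (t : vec) : option R :=
  let s := [seq (Mt t - t p) / 2 | p <- enum {: pairs} & t p < Mt t] in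
  if s is v :: _ then Some (\big[Num.min/v]_(w <- s) w) else None.

Definition ge_opt (o : option R) (w : R) : bool :=
  if o is Some v then w <= v else true.

Definition same_block (t : vec) (a b : X) : bool := (a == b) || (coord t a b < Mt t).
Definition coarse_type (t : vec) : {set {set X}} :=
  [set [set b | same_block t a b] | a in X].

Definition dDelta (x y : vec) : R :=
  \sum_(p : pairs) (y p - x p) + ('C(#|X|, 2))%:R * maxp (fun p => x p - y p).

End Trees.

(* Main.v *)
Require Import Defs.
From HB Require Import structures.
From mathcomp Require Import all_boot all_order all_algebra.
From mathcomp Require Import zify ring lra.
Set Implicit Arguments. Unset Strict Implicit. Unset Printing Implicit Defensive.
Import Order.TTheory GRing.Theory Num.Theory.
Local Open Scope ring_scope.

Section Aux.
Variable R : realFieldType.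

Lemma bigmax_ge (x0 : R) (s : seq R) x : x \in s -> x <= \big[Num.max/x0]_(v <- s) v.
Proof.
elim: s => [//|y s IH]; rewrite inE big_cons => /orP[/eqP->|xs].
  by rewrite le_max lexx.
by rewrite le_max (IH xs) orbT.
Qed.

Lemma bigmin_le (x0 : R) (s : seq R) x : x \in s -> \big[Num.min/x0]_(v <- s) v <= x.
Proof.
elim: s => [//|y s IH]; rewrite inE big_cons => /orP[/eqP->|xs].
  by rewrite ge_min lexx.
by rewrite ge_min (IH xs) orbT.
Qed.

Lemma bigmax_mem (x0 : R) (s : seq R) : \big[Num.max/x0]_(v <- s) v \in x0 :: s.
Proof.
elim: s => [|y s IH]; first by rewrite big_nil mem_head.
rewrite big_cons; have [H|H] := leP y (\big[Num.max/x0]_(v <- s) v).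
  move: IH; rewrite !inE => /orP[->|->]; by rewrite ?orbT.
by rewrite !inE eqxx orbT.
Qed.

Variable X : finType.
Implicit Types (t : vec R X) (p : pairs X).

Lemma maxp_ge (f : pairs X -> R) p : f p <= maxp f.
Proof. by rewrite /maxp; apply: bigmax_ge; apply: map_f; rewrite mem_enum. Qed.

Lemma minp_le (f : pairs X -> R) p : minp f <= f p.
Proof. by rewrite /minp; apply: bigmin_le; apply: map_f; rewrite mem_enum. Qed.

Lemma maxp_att (f : pairs X -> R) p0 : exists p, maxp f = f p.
Proof.
rewrite /maxp.
have : f p0 \in [seq f p | p <- enum {: pairs X}] by apply: map_f; rewrite mem_enum.
move: (bigmax_mem (head 0 [seq f p | p <- enum {: pairs X}]) [seq f p | p <- enum {: pairs X}]).
case E: [seq f p | p <- enum {: pairs X}] => [//|y s] /=.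
rewrite -E => H _.
have : \big[Num.max/y]_(v <- [seq f p | p <- enum {: pairs X}]) v \in [seq f p | p <- enum {: pairs X}].
  by move: H; rewrite inE E => /orP[/eqP->|//]; rewrite mem_head.
by case/mapP => p _ ->; exists p.
Qed.

Lemma pair_of p : exists a b, a != b /\ val p = [set a; b].
Proof. by apply/cards2P; exact: (valP p). Qed.

Lemma mk_pair (a b : X) : a != b -> {p : pairs X | val p = [set a; b]}.
Proof.
move=> ab; have H : #|[set a; b]| == 2%N by rewrite cards2 ab.
by exists (@exist _ (fun A : {set X} => #|A| == 2%N) _ H).
Qed.

Lemma coord_val t p a b : val p = [set a; b] -> Defs.coord t a b = t p.
Proof. by move=> e; rewrite /Defs.coord -e valK. Qed.

Lemma coordC t a b : Defs.coord t a b = Defs.coord t b a.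
Proof. by rewrite /Defs.coord setUC. Qed.

Lemma coord_le t a b : a != b -> Defs.coord t a b <= Mt t.
Proof. by move=> ab; case: (mk_pair ab) => p e; rewrite (coord_val t e) maxp_ge. Qed.

Lemma sb_refl t a : same_block t a a.
Proof. by rewrite /same_block eqxx. Qed.

Lemma sb_sym t a b : same_block t a b = same_block t b a.
Proof. by rewrite /same_block eq_sym coordC. Qed.

Lemma sb_trans t : equidistant t -> forall a b c,
  same_block t a b -> same_block t b c -> same_block t a c.
Proof.
move=> Ht a b c; rewrite /same_block.
case: (eqVneq a b) => [->|ab] //=.
case: (eqVneq b c) => [<-|bc]; first by move=> ->; rewrite orbT.
rewrite /=.
case: (eqVneq a c) => [<-|ac]; first by rewrite ?eqxx.
move=> /= h1 h2.
have := Ht a b c ab ac bc; rewrite /=.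
case: (ltP (Defs.coord t a c) (Mt t)) => // hyM.
have yM : Defs.coord t a c = Mt t by apply/le_anti; rewrite hyM coord_le.
rewrite yM (max_l (ltW h2)) (max_r (ltW h1)) (lt_eqF h1) (lt_eqF h2) /=.
by rewrite andbF.
Qed.

Lemma sb_two t : binary t -> forall a b c, ~~ same_block t a b ->
  same_block t a c || same_block t b c.
Proof.
move=> Hb a b c; rewrite /same_block negb_or => /andP[ab nab].
case: (eqVneq a c) => [->|ac]; first by rewrite ?eqxx.
case: (eqVneq b c) => [->|bc]; first by rewrite ?eqxx ?orbT.
rewrite /=.
have e1 : Defs.coord t a b = Mt t by apply/le_anti; rewrite coord_le // leNgt nab.
apply/negPn/negP; rewrite negb_or -!leNgt => /andP[h2 h3].
have e2 : Defs.coord t a c = Mt t by apply/le_anti; rewrite coord_le.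
have e3 : Defs.coord t b c = Mt t by apply/le_anti; rewrite coord_le.
by case: (Hb a b c ab ac bc); rewrite e1 e2 e3.
Qed.


Lemma nu_bound t w p : ge_opt (nu_depth t) w -> t p < Mt t -> w <= (Mt t - t p) / 2.
Proof.
rewrite /nu_depth /= => H lt.
have : (Mt t - t p) / 2 \in [seq (Mt t - t q) / 2 | q <- enum {: pairs X} & t q < Mt t].
  by apply: map_f; rewrite mem_filter lt mem_enum.
move: H; case: [seq (Mt t - t q) / 2 | q <- enum {: pairs X} & t q < Mt t] => [//|v s] /= H hs.
exact: le_trans H (bigmin_le _ hs).
Qed.

Lemma eta_bound t W p : eta_depth t <= W -> Mt t - t p <= 2 * W.
Proof.
rewrite /eta_depth => H.
have := minp_le t p => hm.
have : Mt t - minp t <= 2 * W.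
  by rewrite -ler_pdivrMl ?ltr0n // mulrC.
move=> h; apply: le_trans h; lra.
Qed.

Lemma refine_eq t t' (p0 : pairs X) : equidistant t -> binary t' ->
  (forall x y, same_block t' x y -> same_block t x y) ->
  forall a b, same_block t a b -> same_block t' a b.
Proof.
move=> Et Bt' inc a b sab; apply/negPn/negP => nab'.
have [p pM] := maxp_att t p0.
have [x [y [xy vp]]] := pair_of p.
have key : forall c, same_block t a c.
  move=> c; case/orP: (sb_two Bt' c nab') => /inc // h.
  exact: sb_trans Et _ _ _ sab h.
have : same_block t x y.
  by apply: (sb_trans Et (b:=a)); [rewrite sb_sym; apply: key | apply: key].
rewrite /same_block (negbTE xy) /= (coord_val t vp) -pM.
by rewrite ltxx.
Qed.


Lemma count_cross t (p0 : pairs X) : equidistant t -> binary t ->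
  (#|X|.-1 <= #|~: [set p : pairs X | (t p < Mt t)%R]|)%N /\
  (4 * #|~: [set p : pairs X | (t p < Mt t)%R]| <= #|X| ^ 2)%N.
Proof.
move=> Et Bt.
have [p pM] := maxp_att t p0.
have [a0 [b0 [ab0 vp]]] := pair_of p.
have nab0 : ~~ same_block t a0 b0.
  by rewrite /same_block (negbTE ab0) /= (coord_val t vp) -pM ltxx.
set A := [set x | same_block t a0 x].
have claim : forall x y, x != y -> (~~ same_block t x y) = ((x \in A) != (y \in A)).
  move=> x y xy; rewrite !inE.
  case: (boolP (same_block t a0 x)) => hx; case: (boolP (same_block t a0 y)) => hy /=.
  - have -> // : same_block t x y.
    by apply: (sb_trans Et (b:=a0)) => //; rewrite sb_sym.
  - by apply/negP => hxy; move/negP: hy; apply; apply: (sb_trans Et hx hxy).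
  - by apply/negP => hxy; move/negP: hx; apply; apply: (sb_trans Et hy); rewrite sb_sym.
  - have hbx : same_block t b0 x by move: (sb_two Bt x nab0); rewrite (negbTE hx).
    have hby : same_block t b0 y by move: (sb_two Bt y nab0); rewrite (negbTE hy).
    have -> // : same_block t x y.
    by apply: (sb_trans Et (b:=b0)) => //; rewrite sb_sym.
have E : val @: (~: [set q : pairs X | t q < Mt t]) =
         (fun u : X * X => [set u.1; u.2]) @: setX A (~: A).
  apply/setP => S; apply/imsetP/imsetP.
  - case=> q; rewrite !inE => hq ->.
    have [x [y [xy vq]]] := pair_of q.
    have : (x \in A) != (y \in A).
      by rewrite -claim // /same_block (negbTE xy) /= (coord_val t vq).
    case: (boolP (x \in A)) => xA /= yA.
      by exists (x, y); rewrite // in_setX in_setC xA.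
    exists (y, x); last by rewrite vq /= setUC.
    by rewrite in_setX in_setC xA; move/negPn: yA => ->.
  - case=> [[x y]]; rewrite !inE /= => /andP[xA yA] ->.
    have xy : x != y by apply: contraNneq yA => <-.
    have [q vq] := mk_pair xy.
    exists q => //; rewrite !inE -(coord_val t vq).
    have := claim x y xy; rewrite !inE xA (negbTE yA) /= /same_block (negbTE xy) /=.
    by move=> ->.
have cnt : #|~: [set q : pairs X | t q < Mt t]| = (#|A| * #|~: A|)%N.
  rewrite -(card_imset _ val_inj) E card_in_imset ?cardsX //.
  move=> [x1 y1] [x2 y2]; rewrite !inE /= => /andP[x1A y1A] /andP[x2A y2A] e.
  have h1 : x1 \in [set x2; y2] by rewrite -e set21.
  have h2 : y1 \in [set x2; y2] by rewrite -e set22.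
  move: h1 h2; rewrite !inE => /orP[/eqP e1|/eqP e1] /orP[/eqP e2|/eqP e2].
  - by move: y1A; rewrite e2 x2A.
  - by rewrite e1 e2.
  - by move: x1A; rewrite e1 (negbTE y2A).
  - by move: x1A; rewrite e1 (negbTE y2A).
have kl := cardsC A.
have k1 : (0 < #|A|)%N by apply/card_gt0P; exists a0; rewrite inE sb_refl.
have l1 : (0 < #|~: A|)%N by apply/card_gt0P; exists b0; rewrite !inE.
rewrite cnt -kl; move: k1 l1; move: #|A| #|~: A| => k l k1 l1.
have h1 : ((k + l).-1 = k + l - 1)%N by lia.
rewrite h1; clear h1; case: k k1 => // k _; case: l l1 => // l _.
have h2 : (0 <= k * l)%N by [].
have h3 : ((k.+1 + l.+1) ^ 2 = (k.+1 + l.+1) * (k.+1 + l.+1))%N by rewrite expnS expn1.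
rewrite h3; split.
- nia.
- by case: (leqP k l) => h; nia.
Qed.

End Aux.

Lemma sum_if (R : realFieldType) (T : finType) (P : pred T) (c : R) :
  \sum_(p : T) (if P p then c else 0) = c * #|[set p | P p]|%:R.
Proof. by rewrite -big_mkcond sumr_const cardsE mulr_natr. Qed.

Theorem mainTheorem6 (R : realFieldType) (X : finType) (t t' : vec R X)
    (Omega omega : R) :
  equidistant t -> binary t -> equidistant t' -> binary t' ->
  coarse_type t != coarse_type t' ->
  0 < omega -> omega < Omega ->
  Num.max (eta_depth t) (eta_depth t') <= Omega ->
  ge_opt (nu_depth t) omega -> ge_opt (nu_depth t') omega ->
  omega * ((3 - 2 * (Omega / omega)) * ('C(#|X|, 2))%:R
           + 3 / 2 * (#|X|)%:R - 2) <= dDelta t t'.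
Proof.
move=> Et Bt Et' Bt' Hct w0 wW Heta Hnu Hnu'.
have [a [b hab]] : exists a b, same_block t a b != same_block t' a b.
  case: (boolP [exists a, exists b, same_block t a b != same_block t' a b]).
    by case/existsP => a /existsP[b h]; exists a, b.
  move=> hn; exfalso; move/eqP: Hct; apply; rewrite /coarse_type.
  apply: eq_imset => x; apply/setP => y; rewrite !inE.
  move: hn; rewrite negb_exists => /forallP /(_ x).
  by rewrite negb_exists => /forallP /(_ y) /negPn /eqP.
have ab : a != b by apply: contraNneq hab => ->; rewrite !sb_refl.
have [p0 _] := mk_pair ab.
have [q /andP[/eqP tq tq']] : exists q : pairs X, (t q == Mt t) && (t' q < Mt t').
  case: (boolP [exists q, (t q == Mt t) && (t' q < Mt t')]).
    by case/existsP => q h; exists q.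
  move=> hn; exfalso.
  have inc : forall x y, same_block t' x y -> same_block t x y.
    move=> x y; rewrite /same_block; case: (eqVneq x y) => //= xy h'.
    have [r vr] := mk_pair xy.
    rewrite (coord_val t vr); rewrite (coord_val t' vr) in h'.
    move: hn; rewrite negb_exists => /forallP /(_ r); rewrite h' andbT => h.
    by rewrite lt_neqAle h maxp_ge.
  have ref := refine_eq p0 Et Bt' inc (a:=a) (b:=b).
  move: hab; case: (boolP (same_block t a b)) => h1; case: (boolP (same_block t' a b)) => h2 //=.
  - by move: h2; rewrite ref.
  - by move: h1; rewrite inc.
have [c1 c2] := count_cross p0 Et Bt.
have [c1' c2'] := count_cross p0 Et' Bt'.
have eta1 : eta_depth t <= Omega by move: Heta; rewrite ge_max => /andP[].
have eta2 : eta_depth t' <= Omega by move: Heta; rewrite ge_max => /andP[].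
set S := [set p : pairs X | t p < Mt t].
set S' := [set p : pairs X | t' p < Mt t'].
have Hn : 'C(#|X|, 2) = #|{: pairs X}|.
  by rewrite card_sig -card_draws; apply: eq_card => A; rewrite inE.
have sum1 : \sum_(p : pairs X) ((Mt t' - Mt t) + (if t p < Mt t then 2 * omega else 0)
               - (if t' p < Mt t' then 2 * Omega else 0))
            <= \sum_(p : pairs X) (t' p - t p).
  apply: ler_sum => p _.
  have le1 := maxp_ge t p; have le2 := maxp_ge t' p.
  case: ifP => h1; case: ifP => h2.
  - have := nu_bound Hnu h1; have := eta_bound p eta2; rewrite /Mt; lra.
  - have e2 : t' p = Mt t' by apply/le_anti; rewrite le2 leNgt h2.
    have := nu_bound Hnu h1; rewrite e2 /Mt; lra.
  - have e1 : t p = Mt t by apply/le_anti; rewrite le1 leNgt h1.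
    have := eta_bound p eta2; rewrite e1 /Mt; lra.
  - have e1 : t p = Mt t by apply/le_anti; rewrite le1 leNgt h1.
    have e2 : t' p = Mt t' by apply/le_anti; rewrite le2 leNgt h2.
    rewrite e1 e2; lra.
rewrite sumrB big_split /= sumr_const !sum_if -/S -/S' in sum1.
have mq : t q - t' q <= maxp (fun p => t p - t' p) := maxp_ge (fun p => t p - t' p) q.
have nq := nu_bound Hnu' tq'.
rewrite /dDelta Hn.
set n := #|{: pairs X}| in sum1 mq *.
set N := #|X| in c1 c2 c1' c2' *.
have hS := cardsC S; have hS' := cardsC S'.
rewrite -/n in hS hS'.
have hn : (2 * n)%N = (N * N.-1)%N.
  by rewrite /n -Hn -mul_bin_diag bin1.
have N1 : (1 <= N)%N by rewrite /N; apply/card_gt0P; exists a.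
have hnR : 2 * n%:R = N%:R * (N%:R - 1) :> R.
  have -> : N%:R - 1 = (N - 1)%N%:R :> R by rewrite natrB.
  by rewrite subn1 -!natrM hn.
have c1R : N%:R <= #|~: S|%:R + 1 :> R.
  by rewrite natr1 ler_nat; apply: leq_trans (leqSpred N) _; rewrite ltnS.
have c1R' : N%:R <= #|~: S'|%:R + 1 :> R.
  by rewrite natr1 ler_nat; apply: leq_trans (leqSpred N) _; rewrite ltnS.
have c2R : 4 * #|~: S|%:R <= N%:R ^+ 2 :> R.
  by rewrite -natrX -(natrM _ 4) ler_nat.
have hSR : #|S|%:R + #|~: S|%:R = n%:R :> R by rewrite -natrD hS.
have hSR' : #|S'|%:R + #|~: S'|%:R = n%:R :> R by rewrite -natrD hS'.
have n0 : 0 <= n%:R :> R by [].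
have m1 : n%:R * (Mt t - t' q) <= n%:R * maxp (fun p => t p - t' p).
  by apply: ler_wpM2l => //; rewrite -tq.
have m2 : n%:R * (2 * omega) <= n%:R * (Mt t' - t' q).
  by apply: ler_wpM2l => //; lra.
have c0' : 0 <= #|~: S'|%:R :> R by [].
have m3 : omega * #|~: S'|%:R <= Omega * #|~: S'|%:R.
  by apply: ler_wpM2r => //; lra.
have m4 : omega * (N%:R - 1) <= omega * #|~: S'|%:R.
  by apply: ler_wpM2l; lra.
have m5 : omega * (4 * #|~: S|%:R) <= omega * (N%:R ^+ 2).
  by apply: ler_wpM2l; lra.
have m6 : omega * (2 * n%:R) = omega * (N%:R * (N%:R - 1)) by rewrite hnR.
have -> : omega * ((3 - 2 * (Omega / omega)) * n%:R + 3 / 2 * N%:R - 2)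
        = 3 * omega * n%:R - 2 * Omega * n%:R + 3 / 2 * omega * N%:R - 2 * omega.
  by field; rewrite lt0r_neq0.
have m7 : omega * #|S|%:R + omega * #|~: S|%:R = omega * n%:R by rewrite -mulrDr hSR.
have m8 : Omega * #|S'|%:R + Omega * #|~: S'|%:R = Omega * n%:R by rewrite -mulrDr hSR'.
rewrite -mulr_natr in sum1.
rewrite expr2 in m5.
lra.
Qed.
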